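(* (1) For $n\ge1$, the primary theta-seed $\Delta_1(\boldsymbol{\theta}_n)$ is nonzero. (2) For $n\ge3$, the secondary theta-seed $\Delta_2(\boldsymbol{\theta}_n)$ is nonzero.
   Context: Let $\mathbb{Q}[\boldsymbol{\theta}_n,\boldsymbol{\xi}_n,\boldsymbol{\rho}_n]$ be the $\mathbb{Q}$-algebra generated by $3n$ pairwise anticommuting variables $\theta_i,\xi_i,\rho_i$ ($1\le i\le n$) (the exterior algebra on them), with $\mathfrak{S}_n$ acting by permuting indices simultaneously in all three sets. Define $\Delta_1(\boldsymbol{\theta}_n):=\sum_{\sigma\in\mathfrak{S}_n}\mathrm{sgn}(\sigma)\sigma(\theta_1\theta_2\cdots\theta_{n-1})$ and, for $n\ge3$, $\Delta_2(\boldsymbol{\theta}_n):=\sum_{\sigma\in\mathfrak{S}_n}\mathrm{sgn}(\sigma)\sigma\bigl((\theta_1\xi_2\rho_2+\theta_2\xi_1\rho_2+\theta_2\xi_2\rho_1)\theta_3\theta_4\cdots\theta_{n-1}\bigr)$, where empty products of $\theta$'s are $1$. *)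

(* Defs.v *)
From HB Require Import structures.
From mathcomp Require Import all_boot all_order all_fingroup all_algebra.
Set Implicit Arguments. Unset Strict Implicit. Unset Printing Implicit Defensive.
Import GRing.Theory.
Local Open Scope ring_scope.

(* Exterior algebra over Q on the 3n generators theta_i, xi_i, rho_i.
   A generator is a pair (k, i) with k : 'I_3 (0 = theta, 1 = xi, 2 = rho)
   and i : 'I_n (index i+1 in the paper).  An element of the exterior
   algebra is a finitely supported function {set generators} -> rat:
   the coefficient of the standard basis monomial e_S = product of the
   generators of S in increasing order (order given by enum_rank). *)

Definition gen (n : nat) := ('I_3 * 'I_n)%type.

Definition ext (n : nat) := {ffun {set gen n} -> rat}.

Definition grank n (g : gen n) : nat := enum_rank g.

(* sign of the shuffle bringing e_A e_B to +- e_(A u B) *)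
Definition shuffle_sign n (A B : {set gen n}) : rat :=
  (-1) ^+ #|[set p : gen n * gen n | (p.1 \in A) && (p.2 \in B)
                                     && (grank p.2 < grank p.1)%N]|.

Definition ext_mul n (a b : ext n) : ext n :=
  [ffun S => \sum_(A : {set gen n}) \sum_(B : {set gen n}
       | (A :&: B == set0) && (A :|: B == S))
       shuffle_sign A B * a A * b B].

Definition ext_one n : ext n := [ffun S => (S == set0)%:R].

Definition ext_gen n (g : gen n) : ext n := [ffun S => (S == [set g])%:R].

Definition ext_scale n (c : rat) (a : ext n) : ext n := [ffun S => c * a S].

Definition ext_prod n (s : seq (gen n)) : ext n :=
  foldr (fun g acc => ext_mul (ext_gen g) acc) (ext_one n) s.

Definition theta n (i : 'I_n) : gen n := (0%R : 'I_3, i).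
Definition xi    n (i : 'I_n) : gen n := (1%R : 'I_3, i).
Definition rho   n (i : 'I_n) : gen n := (2%R : 'I_3, i).

(* S_n acts by permuting indices simultaneously in all three families;
   this action is by algebra automorphisms, so sigma applied to a
   monomial is the monomial in the permuted generators. *)

Definition Delta1 (n : nat) : ext n :=
  \sum_(s : 'S_n) ext_scale ((-1) ^+ s)
     (ext_prod [seq theta (s i) | i <- enum 'I_n & (val i < n.-1)%N]).

(* Delta_2(theta_n) = sum_sigma sgn(sigma) sigma((theta_1 xi_2 rho_2 +
   theta_2 xi_1 rho_2 + theta_2 xi_2 rho_1) theta_3 ... theta_{n-1}),
   for n >= 3 (indices 1,2 of the paper are inord 0, inord 1 here). *)
Definition Delta2_body (n : nat) (i1 i2 : 'I_n) : ext n :=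
  \sum_(s : 'S_n) ext_scale ((-1) ^+ s)
     (let tl := [seq theta (s i) | i <- enum 'I_n & (2 <= val i < n.-1)%N] in
      ext_prod ([:: theta (s i1); xi (s i2); rho (s i2)] ++ tl)
      + ext_prod ([:: theta (s i2); xi (s i1); rho (s i2)] ++ tl)
      + ext_prod ([:: theta (s i2); xi (s i2); rho (s i1)] ++ tl)).

Definition Delta2 (n : nat) : ext n :=
  match n return ext n with
  | m.+3 => Delta2_body (inord 0 : 'I_m.+3) (inord 1 : 'I_m.+3)
  | _ => 0
  end.

(* Main.v *)
Require Import Defs.
From mathcomp Require Import all_boot all_order all_fingroup all_algebra.
From mathcomp Require Import zify lra.
Set Implicit Arguments. Unset Strict Implicit. Unset Printing Implicit Defensive.
Import GRing.Theory Num.Theory.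
Local Open Scope ring_scope.

Lemma enum_rank_val (T : finType) (x : T) : val (enum_rank x) = index x (enum T).
Proof.
rewrite /enum_rank enum_rank_in.unlock insubdK //.
by rewrite -topredE /= cardE index_mem mem_enum.
Qed.

Lemma index_allpairs (A B : eqType) (s : seq A) (t : seq B) a b :
  a \in s -> b \in t ->
  index (a, b) [seq (x, y) | x <- s, y <- t] = (index a s * size t + index b t)%N.
Proof.
elim: s => // a' s IH; rewrite inE /= => /orP[/eqP <-|aS] bt.
  rewrite eqxx /= index_cat.
  have -> : (a, b) \in [seq (a, y) | y <- t] by apply: map_f.
  by rewrite index_map //; move=> y z [].
rewrite index_cat; case: eqP => [->|ne].
  have -> : (a, b) \in [seq (a, y) | y <- t] by apply: map_f.
  by rewrite index_map //; move=> y z [].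
have -> : (a, b) \in [seq (a', y) | y <- t] = false.
  by apply/negP => /mapP [y _ [E _]]; apply: ne.
by rewrite size_map IH // mulSn addnA.
Qed.

Lemma grankE n (k : 'I_3) (i : 'I_n) : grank (k, i) = (k * n + i)%N.
Proof.
rewrite /grank enum_rank_val enumT unlock /=.
rewrite /prod_enum.
rewrite index_allpairs ?mem_enum // !index_enum_ord size_enum_ord //.
Qed.

Fixpoint inv_seq (r : seq nat) : nat :=
  if r is x :: r' then (count (fun y => y < x) r' + inv_seq r')%N else 0%N.

Definition winv n (w : seq (gen n)) := inv_seq (map (@grank n) w).

Lemma ext_mul_genE n (g : gen n) (b : ext n) S :
  ext_mul (ext_gen g) b S =
  if g \in S then (-1) ^+ #|[set h in S :\ g | (grank h < grank g)%N]| * b (S :\ g)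
  else 0.
Proof.
rewrite ffunE (bigD1 [set g]) //= [X in _ + X]big1 ?addr0; last first.
  move=> A HA; apply: big1 => B _; by rewrite ffunE (negbTE HA) mulr0 mul0r.
under eq_bigr do rewrite ffunE eqxx mulr1.
case gS: (g \in S).
  rewrite (big_pred1 (S :\ g)); last first.
    move=> B /=; apply/andP/eqP => [[/eqP HI /eqP HU]|->].
      have gB : g \notin B.
        apply/negP => gB; have : g \in [set g] :&: B by rewrite inE set11 gB.
        by rewrite HI inE.
      by rewrite -HU setU1K.
    split; last by rewrite setD1K.
    apply/eqP/setP => x; rewrite !inE; apply/negP => /and3P [/eqP -> ].
    by rewrite eqxx.
  congr (_ * _); rewrite /shuffle_sign; congr ((-1) ^+ _).
  have pinj : injective (fun h : gen n => (g, h)) by move=> x y [] .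
  rewrite -(card_imset _ pinj); apply: eq_card => -[x y].
  rewrite !inE /=; apply/andP/imsetP.
    move=> [/andP [/eqP -> yS] lt]; exists y => //; by rewrite !inE yS lt.
  move=> [h]; rewrite !inE => /andP [hS lt] [-> ->]; by rewrite eqxx hS.
rewrite big_pred0 // => B; apply/negP => /andP [_ /eqP HU].
by move: gS; rewrite -HU !inE eqxx.
Qed.

Lemma card_filter_set (T : finType) (P : pred T) (w : seq T) :
  uniq w -> #|[set h in [set x in w] | P h]| = count P w.
Proof.
move=> uw.
have -> : [set h in [set x in w] | P h] = [set x in filter P w].
  by apply/setP => h; rewrite !inE mem_filter andbC.
rewrite cardsE -size_filter; apply/card_uniqP; exact: filter_uniq.
Qed.

Lemma ext_prodE n (w : seq (gen n)) S :
  ext_prod w S = (uniq w && (S == [set x in w]))%:R * (-1) ^+ winv w.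
Proof.
elim: w S => [|g w IH] S.
  have -> : [set x in [::]] = set0 :> {set gen n} by apply/setP=> x; rewrite !inE.
  by rewrite /= ffunE mulr1.
rewrite /= ext_mul_genE IH /winv /= -/(winv w) exprD.
have -> : [set x in g :: w] = g |: [set x in w].
  by apply/setP => x; rewrite !inE.
case gw: (g \in w) => /=.
  case: ifP => gS; last by rewrite mul0r.
  have -> : (S :\ g == [set x in w]) = false.
    apply/negP => /eqP E; have : g \in S :\ g by rewrite E inE.
    by rewrite !inE eqxx.
  by rewrite andbF !mul0r mulr0.
case gS: (g \in S); last first.
  have -> : (S == g |: [set x in w]) = false.
    by apply/negP => /eqP E; move: gS; rewrite E !inE eqxx.
  by rewrite andbF mul0r.
have -> : (S :\ g == [set x in w]) = (S == g |: [set x in w]).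
  apply/eqP/eqP => [<-|->]; first by rewrite setD1K.
  by rewrite setU1K // inE gw.
case uw: (uniq w) => /=; last by rewrite !mul0r mulr0.
case: eqP => [E|_]; last by rewrite !mul0r mulr0.
rewrite E setU1K ?inE ?gw // card_filter_set // count_map.
by rewrite !mul1r.
Qed.

Lemma inv_seq_mono (f : nat -> nat) r :
  (forall x y, (f x < f y)%N = (x < y)%N) -> inv_seq (map f r) = inv_seq r.
Proof.
move=> Hf; elim: r => //= x r ->; congr (_ + _)%N.
rewrite count_map; apply: eq_count => y /=; exact: Hf.
Qed.

Lemma bump_lt j x y : (bump j x < bump j y)%N = (x < y)%N.
Proof. rewrite /bump; case: (leqP j x); case: (leqP j y) => /= *; lia. Qed.

Lemma bump_ltj j x : (bump j x < j)%N = (x < j)%N.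
Proof. rewrite /bump; case: (leqP j x) => /= *; lia. Qed.

Lemma count_lt_iota j n : (j <= n)%N -> count (fun x => x < j)%N (iota 0 n) = j.
Proof.
move=> jn; rewrite -(subnKC jn) iotaD count_cat add0n.
rewrite (eq_in_count (a2 := predT)); last by move=> x; rewrite mem_iota.
rewrite count_predT size_iota (eq_in_count (a2 := pred0)) ?count_pred0 ?addn0 //.
by move=> x; rewrite mem_iota /=; lia.
Qed.

Lemma count_perm_enum n (s : 'S_n) (P : pred nat) :
  count P [seq nat_of_ord (s i) | i <- enum 'I_n] = count P (iota 0 n).
Proof.
rewrite -val_enum_ord (_ : [seq nat_of_ord (s i) | i <- enum 'I_n] = map val (map s (enum 'I_n))); last by elim: (enum 'I_n) => //= a l ->.
apply/seq.permP; apply: perm_map; apply: uniq_perm.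
- by rewrite map_inj_uniq ?enum_uniq //; exact: perm_inj.
- exact: enum_uniq.
move=> x; rewrite mem_enum; apply/mapP; exists (s^-1 x)%g; rewrite ?mem_enum //.
by rewrite permKV.
Qed.

Lemma inv_parity n (s : 'S_n) :
  odd (inv_seq [seq nat_of_ord (s i) | i <- enum 'I_n]) = odd_perm s.
Proof.
elim: n s => [|n IH] s.
  have -> : s = 1%g by apply/permP => -[].
  by rewrite enum_ord0 odd_perm1.
set j := s ord0.
pose f (k : 'I_n) := odflt k (unlift j (s (lift ord0 k))).
have Ef : forall k, lift j (f k) = s (lift ord0 k).
  move=> k; rewrite /f; have : j != s (lift ord0 k).
    by rewrite /j (inj_eq perm_inj) neq_lift.
  by case/unlift_some => k' -> ->.
have finj : injective f.
  by move=> k1 k2 E; apply: (@lift_inj _ ord0); apply: (@perm_inj _ s); rewrite -!Ef E.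
pose s' := perm finj.
have -> : s = lift_perm ord0 j s'.
  apply/permP => i; case: (unliftP ord0 i) => [k|] ->.
    by rewrite lift_perm_lift permE Ef.
  by rewrite lift_perm_id.
rewrite odd_lift_perm enum_ordSl map_cons lift_perm_id -map_comp.
rewrite [inv_seq _]/=.
have E : [seq ((fun i : 'I_n.+1 => nat_of_ord (lift_perm ord0 j s' i)) \o lift ord0) i | i <- enum 'I_n]
   = map (bump j) [seq nat_of_ord (s' k) | k <- enum 'I_n].
  rewrite -map_comp; apply: eq_map => k. rewrite /comp lift_perm_lift //.
rewrite E.
rewrite (inv_seq_mono _ (bump_lt j)).
rewrite count_map (eq_count (a2 := fun x => x < j)%N); last by move=> x; exact: bump_ltj.
rewrite (count_perm_enum s') (count_lt_iota (j := j)); last by rewrite -ltnS ltn_ord.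
rewrite oddD IH.
have -> : odd (@ord0 n) = false by [].
by rewrite addFb.
Qed.

Lemma inv_seq_rcons r x :
  inv_seq (r ++ [:: x]) = (inv_seq r + count (fun y => x < y)%N r)%N.
Proof. elim: r => //= y r ->; rewrite count_cat /=; lia. Qed.

Lemma filter_iota_range a b n : (a <= b <= n)%N ->
  filter (fun k => a <= k < b)%N (iota 0 n) = iota a (b - a).
Proof.
move=> /andP [ab bn].
have -> : iota 0 n = iota 0 a ++ iota a (b - a) ++ iota b (n - b).
  have E1 : n = (a + (b - a) + (n - b))%N by lia.
  by rewrite {1}E1 !iotaD !add0n -catA subnKC.
rewrite !filter_cat.
rewrite (eq_in_filter (a2 := pred0)); last by move=> x; rewrite mem_iota /=; lia.
rewrite [X in _ ++ (_ ++ X)](eq_in_filter (a2 := pred0)); last by move=> x; rewrite mem_iota /=; lia.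
rewrite !filter_pred0 (eq_in_filter (a2 := predT)); last by move=> x; rewrite mem_iota /=; lia.
by rewrite filter_predT cats0.
Qed.

Lemma map_filter_enum m (T : Type) (g : 'I_m.+1 -> T) (P : pred nat) :
  [seq g i | i : 'I_m.+1 <- enum 'I_m.+1 & P i] = [seq g (inord k) | k <- iota 0 m.+1 & P k].
Proof.
rewrite -val_enum_ord filter_map -map_comp; apply: eq_map => i /=; by rewrite inord_val.
Qed.

Lemma map_enum_iota m (T : Type) (g : 'I_m.+1 -> T) :
  [seq g i | i <- enum 'I_m.+1] = [seq g (inord k) | k <- iota 0 m.+1].
Proof.
rewrite -val_enum_ord -map_comp; apply: eq_map => i /=; by rewrite inord_val.
Qed.

Lemma theta_inj n : injective (@theta n). Proof. by move=> i j []. Qed.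
Lemma grank_theta n (i : 'I_n) : grank (theta i) = i.
Proof. by rewrite /theta grankE. Qed.

Lemma Delta1_nz m : Delta1 m.+1 != 0.
Proof.
pose w (s : 'S_m.+1) := [seq theta (s i) | i : 'I_m.+1 <- enum 'I_m.+1 & (i < m)%N].
have HD : Delta1 m.+1 = \sum_(s : 'S_m.+1) ext_scale ((-1) ^+ s) (ext_prod (w s)) by [].
pose S1 := [set x in w 1%g].
have key : forall s : 'S_m.+1, (-1) ^+ s * ext_prod (w s) S1 = (S1 == [set x in w s])%:R.
  move=> s; rewrite ext_prodE.
  have -> : uniq (w s).
    rewrite map_inj_uniq; first by apply: filter_uniq; apply: enum_uniq.
    by move=> i j /theta_inj; apply: perm_inj.
  case: eqP => [E|_]; last by rewrite mul0r mulr0.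
  have smax : s ord_max = ord_max.
    apply/eqP; apply/negPn/negP => ne.
    have : theta (s ord_max) \in S1.
      rewrite inE; apply/mapP; exists (s ord_max); last by rewrite perm1.
      rewrite mem_filter mem_enum andbT.
      have := ltn_ord (s ord_max); rewrite ltnS leq_eqVlt => /orP [/eqP H|//].
      by case/eqP: ne; apply: val_inj.
    rewrite E inE => /mapP [i]; rewrite mem_filter => /andP [lt _] /theta_inj /perm_inj iE.
    by move: lt; rewrite -iE /= ltnn.
  have Hw : winv (w s) = inv_seq [seq nat_of_ord (s (inord k)) | k <- iota 0 m].
    rewrite /winv /w -map_comp (eq_map (g := fun i => nat_of_ord (s i))); last first.
      by move=> i /=; rewrite grank_theta.
    rewrite (map_filter_enum (fun i => nat_of_ord (s i)) (fun k => k < m)%N).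
    rewrite (eq_filter (a2 := fun k => 0 <= k < m)%N) // filter_iota_range ?subn0 ?leqnSn //.
  have Hp := inv_parity s.
  have Ei : iota 0 m.+1 = iota 0 m ++ [:: m] by rewrite -addn1 iotaD.
  rewrite (map_enum_iota (fun i => nat_of_ord (s i))) Ei map_cat in Hp.
  have im : inord m = ord_max :> 'I_m.+1 by apply: val_inj; rewrite /= inordK.
  rewrite /= im smax inv_seq_rcons /= in Hp.
  rewrite count_map (eq_count (a2 := pred0)) ?count_pred0 ?addn0 in Hp; last first.
    by move=> y /=; rewrite ltnNge -ltnS ltn_ord.
  by rewrite /= mul1r -(signr_odd _ (winv (w s))) Hw Hp -signr_addb addbb expr0.
apply/eqP => H; have := congr1 (fun f : ext m.+1 => f S1) H.
rewrite HD sum_ffunE /=.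
under eq_bigr do rewrite ffunE key.
have -> : (0 : ext m.+1) S1 = 0 by rewrite ffunE.
rewrite (bigD1 1%g) //= eqxx.
have : 0 <= \sum_(i | i != 1%g) (S1 == [set x in w i])%:R :> rat.
  by apply: sumr_ge0 => i _; apply: ler0n.
rewrite /=; lra.
Qed.

Lemma grank_xi n (i : 'I_n) : grank (xi i) = (n + i)%N.
Proof. by rewrite /xi grankE mul1n. Qed.
Lemma grank_rho n (i : 'I_n) : grank (rho i) = (n + n + i)%N.
Proof. rewrite /rho grankE (_ : nat_of_ord (2%R : 'I_3) = 2%N) //; lia. Qed.

Lemma th_eq n (a b : 'I_n) : (theta a == theta b) = (a == b).
Proof. by rewrite /theta xpair_eqE eqxx. Qed.
Lemma xi_eq n (a b : 'I_n) : (xi a == xi b) = (a == b).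
Proof. by rewrite /xi xpair_eqE eqxx. Qed.
Lemma rho_eq n (a b : 'I_n) : (rho a == rho b) = (a == b).
Proof. by rewrite /rho xpair_eqE eqxx. Qed.
Lemma xi_th n (a b : 'I_n) : (xi a == theta b) = false.
Proof. by rewrite /xi /theta xpair_eqE. Qed.
Lemma rho_th n (a b : 'I_n) : (rho a == theta b) = false.
Proof. by rewrite /rho /theta xpair_eqE. Qed.
Lemma th_xi n (a b : 'I_n) : (theta a == xi b) = false.
Proof. by rewrite /xi /theta xpair_eqE. Qed.
Lemma th_rho n (a b : 'I_n) : (theta a == rho b) = false.
Proof. by rewrite /rho /theta xpair_eqE. Qed.
Lemma xi_rho n (a b : 'I_n) : (xi a == rho b) = false.
Proof. by rewrite /xi /rho xpair_eqE. Qed.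
Lemma rho_xi n (a b : 'I_n) : (rho a == xi b) = false.
Proof. by rewrite /xi /rho xpair_eqE. Qed.
Lemma xi_map_th n (a : 'I_n) (l : seq 'I_n) (g : 'I_n -> 'I_n) :
  (xi a \in [seq theta (g i) | i <- l]) = false.
Proof. by apply/mapP => -[i _ /eqP]; rewrite xi_th. Qed.
Lemma rho_map_th n (a : 'I_n) (l : seq 'I_n) (g : 'I_n -> 'I_n) :
  (rho a \in [seq theta (g i) | i <- l]) = false.
Proof. by apply/mapP => -[i _ /eqP]; rewrite rho_th. Qed.

Lemma inv_seq_cons x r : inv_seq (x :: r) = (count (fun y => y < x)%N r + inv_seq r)%N.
Proof. by []. Qed.

Lemma inv3 (a b c N : nat) R : (a < N)%N -> (forall x, x \in R -> x < N)%N ->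
  (N <= b)%N -> (b < c)%N ->
  odd (inv_seq ([:: a; b; c] ++ R)) = odd (inv_seq (a :: R)).
Proof.
move=> aN RN Nb bc; rewrite cat_cons !inv_seq_cons /=.
have -> : (b < a)%N = false by apply/negbTE; rewrite -leqNgt; lia.
have -> : (c < a)%N = false by apply/negbTE; rewrite -leqNgt; lia.
have -> : (c < b)%N = false by apply/negbTE; rewrite -leqNgt; lia.
rewrite (@eq_in_count _ (fun y => y < b)%N predT); last by move=> x /RN /=; lia.
rewrite (@eq_in_count _ (fun y => y < c)%N predT); last by move=> x /RN /=; lia.
rewrite count_predT /= !add0n.
rewrite (_ : (count (fun y => y < a)%N R + (size R + (size R + inv_seq R)))%N
   = ((count (fun y => y < a)%N R + inv_seq R) + (size R).*2)%N); last by rewrite -addnn; lia.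
by rewrite oddD odd_double addbF.
Qed.

Definition d1 m : 'I_m.+3 := inord 0.
Definition d2 m : 'I_m.+3 := inord 1.
Definition tt2 m : 'S_m.+3 := tperm (d1 m) (d2 m).
Definition tl2 m (s : 'S_m.+3) :=
  [seq theta (s i) | i : 'I_m.+3 <- enum 'I_m.+3 & (2 <= i < m.+2)%N].
Definition w1 m (s : 'S_m.+3) := [:: theta (s (d2 m)); xi (s (d1 m)); rho (s (d1 m))] ++ tl2 s.
Definition w2 m (s : 'S_m.+3) := [:: theta (s (d1 m)); xi (s (d2 m)); rho (s (d1 m))] ++ tl2 s.
Definition w3 m (s : 'S_m.+3) := [:: theta (s (d1 m)); xi (s (d1 m)); rho (s (d2 m))] ++ tl2 s.
Definition S2 m := [set x in w1 (1%g : 'S_m.+3)].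

Lemma v1 m : val (d1 m) = 0%N. Proof. by rewrite /= inordK. Qed.
Lemma v2 m : val (d2 m) = 1%N. Proof. by rewrite /= inordK. Qed.

Lemma HD2 m : Delta2 m.+3 = \sum_(s : 'S_m.+3) ext_scale ((-1) ^+ (tt2 m * s)%g)
     (ext_prod (w1 s) + ext_prod (w2 s) + ext_prod (w3 s)).
Proof.
rewrite -[Delta2 m.+3]/(Delta2_body (d1 m) (d2 m)) /Delta2_body.
rewrite [LHS](reindex_inj (mulgI (tt2 m))).
apply: eq_bigr => s _.
have Htl : [seq theta ((tt2 m * s)%g i) | i : 'I_m.+3 <- enum 'I_m.+3 & (2 <= val i < m.+2)%N] = tl2 s.
  rewrite /tl2; apply/eq_in_map => i; rewrite mem_filter => /andP [/andP [Hi _] _].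
  rewrite permM tpermD //; apply/negP => /eqP E; move: Hi; by rewrite -E ?v1 ?v2.
rewrite Htl.
rewrite !permM tpermL tpermR.
done.
Qed.

Lemma mx m (a : 'I_m.+3) : xi a \in S2 m -> a = d1 m.
Proof.
rewrite inE /w1 mem_cat !inE xi_th xi_rho xi_map_th xi_eq perm1 orbF.
by rewrite ?orbF => /eqP.
Qed.

Lemma mr m (a : 'I_m.+3) : rho a \in S2 m -> a = d1 m.
Proof.
rewrite inE /w1 mem_cat !inE rho_th rho_xi rho_map_th rho_eq perm1 orbF.
by rewrite ?orbF => /eqP.
Qed.

Lemma mt m (s : 'S_m.+3) (a : 'I_m.+3) : theta a \in [set x in w1 s] ->
    a = s (d2 m) \/ exists2 i : 'I_m.+3, (2 <= i < m.+2)%N & a = s i.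
Proof.
rewrite inE /w1 mem_cat !inE th_xi th_rho th_eq !orbF.
case/orP => [/eqP ->|]; first by left.
by move/mapP => [i]; rewrite mem_filter => /andP [Hi _] /eqP; rewrite th_eq => /eqP ->; right; exists i.
Qed.

Lemma mt' m (a : 'I_m.+3) : a = d2 m \/ (2 <= a < m.+2)%N -> theta a \in S2 m.
Proof.
move=> [->|Ha]; rewrite inE /w1 mem_cat.
  by apply/orP; left; rewrite inE perm1 eqxx.
apply/orP; right; apply/mapP; exists a; last by rewrite perm1.
by rewrite mem_filter Ha mem_enum.
Qed.

Lemma i12 m : d1 m != d2 m.
Proof. by apply/negP => /eqP /(congr1 val); rewrite v1 v2. Qed.

Lemma c2 m (s : 'S_m.+3) : ext_prod (w2 s) (S2 m) = 0.
Proof.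
rewrite ext_prodE.
suff -> : (S2 m == [set x in w2 s]) = false by rewrite andbF mul0r.
apply/negP => /eqP E.
have h1 : xi (s (d2 m)) \in S2 m by rewrite E inE /w2 mem_cat !inE eqxx ?orbT.
have h2 : rho (s (d1 m)) \in S2 m by rewrite E inE /w2 mem_cat !inE eqxx ?orbT.
move: (mx h1) (mr h2) => e1 e2.
have : s (d1 m) = s (d2 m) by rewrite e1 e2.
by move/perm_inj => E12; have := i12 m; rewrite E12 eqxx.
Qed.

Lemma c3 m (s : 'S_m.+3) : ext_prod (w3 s) (S2 m) = 0.
Proof.
rewrite ext_prodE.
suff -> : (S2 m == [set x in w3 s]) = false by rewrite andbF mul0r.
apply/negP => /eqP E.
have h1 : xi (s (d1 m)) \in S2 m by rewrite E inE /w3 mem_cat !inE eqxx ?orbT.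
have h2 : theta (s (d1 m)) \in S2 m by rewrite E inE /w3 mem_cat !inE eqxx ?orbT.
move: (mx h1) => e1; rewrite e1 in h2.
case: (mt h2) => [|[i Hi]]; rewrite perm1.
  by move/eqP; rewrite (negbTE (i12 m)).
by move=> E1; move: Hi; rewrite -E1 v1.
Qed.

Lemma uw m (s : 'S_m.+3) : uniq (w1 s).
Proof.
rewrite /w1 cat_uniq /=.
rewrite map_inj_uniq; last by move=> i j /theta_inj; apply: perm_inj.
rewrite (filter_uniq _ (enum_uniq _)) andbT.
apply/hasPn => x /mapP [i]; rewrite mem_filter => /andP [Hi _] ->.
rewrite !inE th_xi th_rho th_eq (inj_eq perm_inj) !orbF.
by apply/negP => /eqP E; move: Hi; rewrite E v2.
Qed.

Lemma c1 m (s : 'S_m.+3) :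
  (-1) ^+ (tt2 m * s)%g * ext_prod (w1 s) (S2 m) = - (S2 m == [set x in w1 s])%:R.
Proof.
rewrite ext_prodE uw /=.
case: eqP => [E|_]; last by rewrite mul0r mulr0 oppr0.
have si1 : s (d1 m) = d1 m by apply: mx; rewrite E inE /w1 mem_cat !inE eqxx ?orbT.
have smax : s ord_max = ord_max.
  apply/eqP; apply/negPn/negP => ne.
  set j := s ord_max.
  have j1 : j != d1 m.
    by apply/negP => /eqP; rewrite -si1 => /perm_inj /(congr1 val); rewrite v1.
  have : theta j \in S2 m.
    apply: mt'; case: (eqVneq j (d2 m)) => [->|j2]; first by left.
    right; apply/andP; split.
      by move: j1 j2; rewrite -!(inj_eq val_inj) v1 v2 /=; lia.
    move: ne; rewrite -(inj_eq val_inj) /= -/j; have := ltn_ord j; lia.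
  rewrite E => /mt [/perm_inj /(congr1 val) /=|[i Hi /perm_inj E1]].
    by rewrite v2.
  by move: Hi; rewrite -E1 /=; lia.
pose F k := nat_of_ord (s (inord k) : 'I_m.+3).
have Etl : map (@grank _) (tl2 s) = map F (iota 2 m).
  rewrite /tl2 -map_comp (eq_map (g := fun i => nat_of_ord (s i))); last first.
    by move=> i /=; rewrite grank_theta.
  rewrite (map_filter_enum (fun i => nat_of_ord (s i)) (fun k => 2 <= k < m.+2)%N).
  rewrite filter_iota_range; last by lia.
  by rewrite (_ : (m.+2 - 2 = m)%N); last by lia.
have Hw : odd (winv (w1 s)) = odd (inv_seq (nat_of_ord (s (d2 m)) :: map F (iota 2 m))).
  rewrite /winv /w1 map_cat Etl !map_cons grank_theta grank_xi grank_rho.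
  apply: (inv3 (N := m.+3)); first exact: ltn_ord.
  - by move=> x /mapP [k _ ->]; apply: ltn_ord.
  - exact: leq_addr.
  - lia.
have Hp := inv_parity s.
rewrite (map_enum_iota (fun i => nat_of_ord (s i))) in Hp.
have Ei : iota 0 m.+3 = 0 :: 1 :: (iota 2 m ++ [:: m.+2]).
  rewrite (_ : m.+3 = (2 + (m + 1))%N); last by lia.
  by rewrite !iotaD add2n.
rewrite Ei map_cons inv_seq_cons in Hp.
rewrite (eq_count (a2 := pred0)) in Hp; last first.
  by move=> y; rewrite [inord 0]/(d1 m) si1 v1.
rewrite count_pred0 add0n map_cons map_cat -cat_cons inv_seq_rcons in Hp.
have im : inord m.+2 = ord_max :> 'I_m.+3 by apply: val_inj; rewrite /= inordK.
rewrite im smax (eq_in_count (a2 := pred0)) ?count_pred0 ?addn0 in Hp; last first.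
  move=> y; rewrite inE => /orP [/eqP ->|/mapP [k _ ->]] /=;
    by rewrite ltnNge -ltnS ltn_ord.
have Hp2 : odd (inv_seq (nat_of_ord (s (d2 m)) :: map F (iota 2 m))) = odd_perm s := Hp.
rewrite mul1r odd_permM odd_tperm (i12 m) -(signr_odd _ (winv _)) Hw Hp2 signr_addb.
by rewrite -mulrA -signr_addb addbb expr0 mulr1 expr1.
Qed.

Lemma ext_addE n (f g : ext n) S : (f + g) S = f S + g S.
Proof. by rewrite ffunE. Qed.

Lemma Delta2_nz m : Delta2 m.+3 != 0.
Proof.
apply/eqP => H; have := congr1 (fun f : ext m.+3 => f (S2 m)) H.
rewrite HD2 sum_ffunE.
under eq_bigr => s _ do rewrite ffunE !ext_addE c2 c3 !addr0 c1.
have -> : (0 : ext m.+3) (S2 m) = 0 by rewrite ffunE.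
rewrite (bigD1 1%g) //= eqxx.
have : 0 <= \sum_(i | i != 1%g) (S2 m == [set x in w1 i])%:R :> rat.
  by apply: sumr_ge0 => i _; apply: ler0n.
rewrite sumrN /=; lra.
Qed.

Theorem proposition4p5 :
  (forall n : nat, (1 <= n)%N -> Delta1 n != 0) /\
  (forall n : nat, (3 <= n)%N -> Delta2 n != 0).
Proof.
split.
  by case=> // m _; apply: Delta1_nz.
by case=> [|[|[|m]]] // _; apply: Delta2_nz.
Qed.
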